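(* Consider the optimal clique cover delivery problem for a system with $K$ users and a set $\mathcal{W}$ of subfiles to be delivered. The Size-Aware Coded Multicast (SACM) algorithm, defined as follows, achieves a $(1+\log K)$-approximation to this problem (its output is a set of cliques covering $\mathcal{W}$ whose total size is at most $(1+\log K)$ times the optimal value). SACM: set $\mathscr{C}=\emptyset$, $\mathcal{E}=\mathcal{W}$; while $\mathcal{E}\neq\emptyset$: compute $\mathcal{P}^*=\mathrm{SBO}(\mathcal{E})$, set $\mathscr{C}=\mathscr{C}\cup\{\mathcal{P}^*\}$ and $\mathcal{E}=\mathcal{E}\setminus\mathcal{P}^*$; output $\mathscr{C}$. Here $\mathrm{SBO}(\mathcal{E})$ is computed as: let $\mathcal{M}=\{k\in[K]: W_{k,\mathcal{A}}\in\mathcal{E}\text{ for some }\mathcal{A}\}$ and $\mathscr{T}$ the set of nonempty subsets of $\mathcal{M}$; for each $\mathcal{T}\in\mathscr{T}$ and $j\in\mathcal{T}$ let $\mathcal{L}_{j,\mathcal{T}}=\{W_{j,\mathcal{A}}\in\mathcal{E}:\mathcal{T}\setminus\{j\}\subseteq\mathcal{A}\}$ (replaced by $\{W_*\}$ with $\|W_*\|=\infty$ if empty), let $V_{j,\mathcal{T}}$ be an element of $\mathcal{L}_{j,\mathcal{T}}$ of minimum size (ties arbitrary), and $\mathcal{R}_{\mathcal{T}}=\{V_{j,\mathcal{T}}:j\in\mathcal{T}\}$ with $\|\mathcal{R}_{\mathcal{T}}\|=\max_{j\in\mathcal{T}}\|V_{j,\mathcal{T}}\|$; return a set $\mathcal{R}_{\mathcal{T}}$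 maximizing $|\mathcal{T}|/\|\mathcal{R}_{\mathcal{T}}\|$ over $\mathcal{T}\in\mathscr{T}$ (ties arbitrary).
   Context: Setting: a server and $K$ users, $[K]=\{1,\dots,K\}$; user $k$ requests file $W_k$. For $k\in[K]$ and $\mathcal{A}\subseteq[K]\setminus\{k\}$, $W_{k,\mathcal{A}}$ denotes the subfile of $W_k$ consisting of the bits cached exactly by the users in $\mathcal{A}$, and $\|W_{k,\mathcal{A}}\|$ is its size in bits (arbitrary nonnegative integers). The set of subfiles to be delivered is $\mathcal{W}=\{W_{k,\mathcal{A}}: k\in[K],\ \mathcal{A}\subseteq[K]\setminus\{k\},\ \|W_{k,\mathcal{A}}\|\neq 0\}$. A clique (feasible packet) is a nonempty set $\mathcal{P}\subseteq\mathcal{W}$ of the form $\{W_{k,\mathcal{A}_k}:k\in\mathcal{M}'\}$ for some $\mathcal{M}'\subseteq[K]$ (at most one subfile per user) such that $k\in\mathcal{A}_{k'}$ for all distinct $k,k'\in\mathcal{M}'$; it models sending the bitwise XOR of its subfiles (zero-padded to the longest one). Its size is $\|\mathcal{P}\|=\max_{W\in\mathcal{P}}\|W\|$. The optimal clique cover delivery problem: choose a set of cliques whose union is $\mathcal{W}$ minimizing the sum of their sizes. *)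

(* Defs.v *)
From HB Require Import structures.
From mathcomp Require Import all_boot all_order all_algebra.
From mathcomp Require Import reals exp.
Set Implicit Arguments. Unset Strict Implicit. Unset Printing Implicit Defensive.
Import Order.TTheory GRing.Theory Num.Theory.
Local Open Scope ring_scope.

(* Users are 'I_K.  The subfile W_{k,A} is encoded by the pair (k, A).
   Sizes: sz k A = ||W_{k,A}|| in bits (arbitrary nonnegative integers). *)
Notation subfile K := ('I_K * {set 'I_K})%type.

Section Clique.
Variables (K : nat) (sz : 'I_K -> {set 'I_K} -> nat).

Definition fsize (x : subfile K) : nat := sz x.1 x.2.

Definition Wset : {set subfile K} :=
  [set x : subfile K | (x.1 \notin x.2) && (fsize x != 0%N)].

Definition is_clique (P : {set subfile K}) : bool :=
  [&& P != set0, P \subset Wset,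
      [forall x in P, forall y in P, (x.1 == y.1) ==> (x == y)]
    & [forall x in P, forall y in P, (x.1 != y.1) ==> (x.1 \in y.2)]].

Definition clique_size (P : {set subfile K}) : nat := (\max_(x in P) fsize x)%N.

Definition is_clique_cover (C : {set {set subfile K}}) : bool :=
  [forall P in C, is_clique P] && (\bigcup_(P in C) P == Wset).

Definition cover_cost (C : {set {set subfile K}}) : nat :=
  (\sum_(P in C) clique_size P)%N.

Definition users (E : {set subfile K}) : {set 'I_K} :=
  [set k | [exists A, (k, A) \in E]].

Definition Lset (E : {set subfile K}) (j : 'I_K) (T : {set 'I_K}) :
  {set {set 'I_K}} := [set A | ((j, A) \in E) && (T :\ j \subset A)].

(* V : 'I_K -> option {set 'I_K} is a valid choice of the V_{j,T}, j in T:
   None encodes the dummy W_* of infinite size (L_{j,T} empty), otherwise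
   V j = Some A with W_{j,A} an element of L_{j,T} of minimum size. *)
Definition valid_choice (E : {set subfile K}) (T : {set 'I_K})
    (V : 'I_K -> option {set 'I_K}) : Prop :=
  forall j, j \in T ->
    match V j with
    | None => Lset E j T = set0
    | Some A => A \in Lset E j T /\
                (forall B, B \in Lset E j T -> (sz j A <= sz j B)%N)
    end.

(* |T| / ||R_T||, with ratio 0 when ||R_T|| = infinity *)
Definition ratio (T : {set 'I_K}) (V : 'I_K -> option {set 'I_K}) : rat :=
  if [forall j in T, V j != None] then
    (#|T|%:R / (\max_(j in T) (if V j is Some A then sz j A else 0%N))%N%:R)
  else 0.

Definition Rset (T : {set 'I_K}) (V : 'I_K -> option {set 'I_K}) :
  {set subfile K} :=
  [set x : subfile K | (x.1 \in T) && (V x.1 == Some x.2)].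

(* P is a possible output of SBO(E) (for some tie-breaking). *)
Definition SBO_out (E : {set subfile K}) (P : {set subfile K}) : Prop :=
  exists (T : {set 'I_K}) (V : 'I_K -> option {set 'I_K}),
    [/\ T \subset users E, T != set0, valid_choice E T V,
        (forall (T' : {set 'I_K}) (V' : 'I_K -> option {set 'I_K}), T' \subset users E -> T' != set0 ->
           valid_choice E T' V' -> ratio T' V' <= ratio T V)
      & P = Rset T V].

(* A complete run of the while-loop of SACM starting from E = E0,
   producing the successive packets P_1, ..., P_n. *)
Fixpoint sacm_run (E : {set subfile K}) (Ps : seq {set subfile K}) : Prop :=
  match Ps with
  | [::] => E = set0
  | P :: Ps' => E != set0 /\ SBO_out E P /\ sacm_run (E :\: P) Ps'
  end.

Definition sacm_output (Ps : seq {set subfile K}) : {set {set subfile K}} :=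
  [set P | P \in Ps].

End Clique.

(* Main.v *)
Require Import Defs.
From HB Require Import structures.
From mathcomp Require Import all_boot all_order all_algebra.
From mathcomp Require Import reals exp.
From mathcomp Require Import ring lra zify.
Set Implicit Arguments. Unset Strict Implicit. Unset Printing Implicit Defensive.
Import Order.TTheory GRing.Theory Num.Theory.
Local Open Scope ring_scope.

Section Harm.
Variable R : realType.
Definition Hn (n : nat) : R := \sum_(i < n) (i.+1%:R)^-1.

Lemma Hn_le_ln n : Hn n <= 1 + ln (n%:R : R).
Proof.
elim: n => [|n IH].
  by rewrite /Hn big_ord0 ln0 // addr0.
rewrite /Hn big_ord_recr /= -/(Hn n).
case: n IH => [|n] IH.
  by rewrite /Hn big_ord0 ln1 add0r addr0 invr1.
have hp : (0 : R) < n.+1%:R by rewrite ltr0n.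
have hq : (0 : R) < n.+2%:R by rewrite ltr0n.
have key : ln (n.+1%:R : R) + (n.+2%:R)^-1 <= ln (n.+2%:R).
  have h1 : -1 < - (n.+2%:R : R)^-1.
    rewrite ltrN2 invf_lt1 // ltr1n //.
  have := le_ln1Dx h1.
  have -> : 1 - (n.+2%:R : R)^-1 = n.+1%:R / n.+2%:R.
    apply: (mulIf (lt0r_neq0 hq)); rewrite mulrBl divfK ?lt0r_neq0 // mulVf ?lt0r_neq0 //.
    by rewrite mul1r -natr1 addrK.
  rewrite ln_div ?posrE // => h; move: h; set a := ln _; set b := ln _; set c := _^-1 => h; lra.
move: IH key; set a := ln _; set b := ln _; set c := _^-1; set d := Hn _ => h1 h2; lra.
Qed.
End Harm.

Lemma exists_argmax (T : finType) (D : {set T}) (f : T -> rat) :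
  D != set0 -> exists2 t, t \in D & forall t', t' \in D -> f t' <= f t.
Proof.
case/set0Pn => t0 Ht0.
case: (@arg_maxP _ _ _ t0 (fun t => t \in D) f Ht0) => t Ht Hmax.
by exists t.
Qed.

Section Main.
Variables (K : nat) (sz : 'I_K -> {set 'I_K} -> nat).

Lemma inW x : (x \in Wset sz) = (x.1 \notin x.2) && (fsize sz x != 0%N).
Proof. by rewrite inE. Qed.

Lemma fsize_pos x : x \in Wset sz -> (0 < fsize sz x)%N.
Proof. by rewrite inW lt0n => /andP[]. Qed.

Lemma clique_inj S : is_clique sz S -> {in S &, injective (fun x : subfile K => x.1)}.
Proof.
case/and4P => _ _ /forallP H _ x y xS yS /= exy.
by have /forall_inP /(_ y yS) := implyP (H x) xS; rewrite exy eqxx => /implyP /(_ isT) /eqP.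
Qed.

Lemma clique_adj S x y : is_clique sz S -> x \in S -> y \in S -> x.1 != y.1 -> x.1 \in y.2.
Proof.
case/and4P => _ _ _ /forallP H xS yS nxy.
by have /forall_inP /(_ y yS) := implyP (H x) xS; rewrite nxy => /implyP /(_ isT).
Qed.

Lemma clique_card S : is_clique sz S -> (#|S| <= K)%N.
Proof.
move=> HS; rewrite -(card_in_imset (clique_inj HS)).
by apply: leq_trans (max_card _) _; rewrite card_ord.
Qed.

Definition Vc (E : {set subfile K}) (T : {set 'I_K}) (j : 'I_K) : option {set 'I_K} :=
  if [pick A in Lset E j T] is Some A0
  then Some [arg min_(B < A0 in Lset E j T) sz j B] else None.

Lemma Vc_valid E T : valid_choice sz E T (Vc E T).
Proof.
move=> j _; rewrite /Vc; case: pickP => [A0 HA0|H0].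
  by case: arg_minnP => // B HB Hmin; split.
by apply/setP => A; rewrite in_set0; exact: H0.
Qed.

Lemma valid_none E T V j : valid_choice sz E T V -> j \in T ->
  (V j == None) = (Lset E j T == set0).
Proof.
move=> HV jT; have := HV j jT; case: (V j) => [A [hA _]|->]; last by rewrite !eqxx.
by apply/esym/negbTE/set0Pn; exists A.
Qed.

Definition mval (T : {set 'I_K}) (V : 'I_K -> option {set 'I_K}) : nat :=
  (\max_(j in T) (if V j is Some A then sz j A else 0%N))%N.

Lemma ratio_eq E T V V' : valid_choice sz E T V -> valid_choice sz E T V' ->
  Defs.ratio sz T V = Defs.ratio sz T V'.
Proof.
move=> HV HV'; rewrite /Defs.ratio.
have Hf : forall j, j \in T -> (V j != None) = (V' j != None).
  by move=> j jT; rewrite (valid_none HV jT) (valid_none HV' jT).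
case: ifP => h1; case: ifP => h2 //.
- congr (_ / _%:R).
  apply: eq_bigr => j jT.
  have := HV j jT; have := HV' j jT.
  case: (V j) => [A|]; case: (V' j) => [B|] //.
  + by move=> [hB mB] [hA mA]; apply/eqP; rewrite eqn_leq mA // mB.
  + by move=> -> [hA _]; rewrite in_set0 in hA.
  + by move=> [hB _] hN; rewrite hN in_set0 in hB.
- suff : false by []. rewrite -h2; apply/forall_inP => j jT.
  by rewrite -Hf //; move/forall_inP: h1; apply.
- suff : false by []. rewrite -h1; apply/forall_inP => j jT.
  by rewrite Hf //; move/forall_inP: h2; apply.
Qed.

Lemma ratio_pos_inv T V : 0 < Defs.ratio sz T V ->
  [/\ forall j, j \in T -> V j != None, (0 < mval T V)%N &
      Defs.ratio sz T V = #|T|%:R / (mval T V)%:R].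
Proof.
rewrite /Defs.ratio; case: ifP => [h pos|]; last by rewrite ltxx.
have hm : (0 < mval T V)%N.
  rewrite lt0n; apply/negP => /eqP m0; move: pos; rewrite /mval in m0.
  by rewrite m0 invr0 mulr0 ltxx.
by split => //; apply/forall_inP.
Qed.

Lemma Rset_sub (E : {set subfile K}) T V : valid_choice sz E T V -> Rset T V \subset E.
Proof.
move=> HV; apply/subsetP => -[j A]; rewrite inE /= => /andP[jT /eqP hV].
by have := HV j jT; rewrite hV => -[]; rewrite inE => /andP[].
Qed.

Lemma Rset_clique (E : {set subfile K}) T V : E \subset Wset sz -> valid_choice sz E T V -> T != set0 ->
  (forall j, j \in T -> V j != None) -> is_clique sz (Rset T V).
Proof.
move=> EW HV T0 HS; apply/and4P; split.
- case/set0Pn: T0 => j jT; have := HS j jT.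
  case hj: (V j) => [A|] // _; apply/set0Pn; exists (j, A).
  by rewrite inE /= jT hj eqxx.
- exact: subset_trans (Rset_sub HV) EW.
- apply/forall_inP => -[i A]; rewrite inE /= => /andP[iT /eqP hi].
  apply/forall_inP => -[j B]; rewrite inE /= => /andP[jT /eqP hj].
  by apply/implyP => /eqP eij; move: hj; rewrite -eij hi => -[->].
- apply/forall_inP => -[i A]; rewrite inE /= => /andP[iT /eqP hi].
  apply/forall_inP => -[j B]; rewrite inE /= => /andP[jT /eqP hj].
  apply/implyP => nij; have := HV j jT; rewrite hj => -[].
  rewrite inE => /andP[_ /subsetP] sub _; apply: sub.
  by rewrite !inE nij.
Qed.

Lemma card_T_le_P (T : {set 'I_K}) (V : 'I_K -> option {set 'I_K}) : (forall j, j \in T -> V j != None) -> (#|T| <= #|Rset T V|)%N.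
Proof.
move=> HS.
pose f := fun j : 'I_K => (j, odflt set0 (V j)).
have finj : injective f by move=> i j /(congr1 fst).
rewrite -(card_imset T finj); apply: subset_leq_card; apply/subsetP => x.
case/imsetP => j jT ->; have := HS j jT; rewrite inE /f /= jT.
by case hV: (V j) => [A|] //=.
Qed.

Lemma size_P_le T V : (clique_size sz (Rset T V) <= mval T V)%N.
Proof.
apply/bigmax_leqP => x; rewrite inE => /andP[xT /eqP hV].
by apply: leq_trans (leq_bigmax_cond _ xT); rewrite /fsize hV.
Qed.

Lemma greedy_key (E : {set subfile K}) (T : {set 'I_K}) V (S : {set subfile K}) :
  E \subset Wset sz -> valid_choice sz E T V ->
  (forall (T' : {set 'I_K}) (V' : 'I_K -> option {set 'I_K}), T' \subset users E -> T' != set0 -> valid_choice sz E T' V' ->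
      Defs.ratio sz T' V' <= Defs.ratio sz T V) ->
  is_clique sz S ->
  (S :&: E != set0 -> 0 < Defs.ratio sz T V) /\
  (clique_size sz (Rset T V) * #|S :&: E| <= #|Rset T V| * clique_size sz S)%N.
Proof.
move=> EW HV Hmax HS.
set Q := S :&: E.
have [Q0|/set0Pn [x0 xQ0]] := eqVneq Q set0; first by rewrite Q0 cards0 muln0; split => //; rewrite eqxx.
set T' := [set x.1 | x in Q].
set V' := Vc E T'.
have QS : Q \subset S := subsetIl _ _.
have QE : Q \subset E := subsetIr _ _.
have inL : forall x, x \in Q -> x.2 \in Lset E x.1 T'.
  move=> x xQ; have xE := subsetP QE x xQ.
  case: x xQ xE => a b /= xQ xE; rewrite inE xE /=.
  apply/subsetP => y; rewrite !inE => /andP[ya /imsetP [z zQ ezy]].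
  rewrite ezy; apply: (clique_adj HS (subsetP QS z zQ) (subsetP QS _ xQ)).
  by rewrite -ezy.
have HV' : valid_choice sz E T' V' := @Vc_valid E T'.
have Vsome : forall j, j \in T' -> exists2 B, V' j = Some B &
    (0 < sz j B)%N && (sz j B <= clique_size sz S)%N.
  move=> j /imsetP[x xQ ->].
  have := HV' x.1 (imset_f _ xQ); case hv: (V' x.1) => [B|].
  - move=> [hB hmin]; exists B => //; apply/andP; split.
    + move: hB; rewrite inE => /andP[hE _]; exact: fsize_pos (subsetP EW _ hE).
    + apply: leq_trans (hmin _ (inL x xQ)) _.
      exact: (@leq_bigmax_cond _ _ (fsize sz) x (subsetP QS x xQ)).
  - by move=> hL; have := inL x xQ; rewrite hL inE.
have cardT' : #|T'| = #|Q|.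
  by apply: card_in_imset => x y xQ yQ; apply: (clique_inj HS); apply: (subsetP QS).
have m'le : (mval T' V' <= clique_size sz S)%N.
  by apply/bigmax_leqP => j jT'; have [B -> /andP[_ h]] := Vsome j jT'.
have m'pos : (0 < mval T' V')%N.
  have jT' : x0.1 \in T' := imset_f _ xQ0.
  have [B hB /andP[h _]] := Vsome _ jT'.
  apply: (leq_trans h); rewrite /mval; apply: leq_trans (leq_bigmax_cond _ jT').
  by rewrite hB.
have rT' : Defs.ratio sz T' V' = #|Q|%:R / (mval T' V')%:R.
  rewrite /Defs.ratio ifT; first by rewrite cardT'.
  by apply/forall_inP => j jT'; have [B -> _] := Vsome j jT'.
have cS0 : (0 < clique_size sz S)%N := leq_trans m'pos m'le.
have hle : Defs.ratio sz T' V' <= Defs.ratio sz T V.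
  apply: Hmax => //.
  - apply/subsetP => j /imsetP[x xQ ->]; rewrite inE; apply/existsP; exists x.2.
    by rewrite -surjective_pairing (subsetP QE).
  - by apply/set0Pn; exists x0.1; exact: imset_f.
have ratpos : 0 < Defs.ratio sz T' V'.
  rewrite rT' divr_gt0 // ltr0n // card_gt0; apply/set0Pn; by exists x0.
have [HS1 mpos rTV] := ratio_pos_inv (lt_le_trans ratpos hle).
split; first by move=> _; exact: lt_le_trans ratpos hle.
have key : (#|Q| * mval T V <= #|T| * clique_size sz S)%N.
  have h1 : (#|Q|%:R / (clique_size sz S)%:R : rat) <= #|T|%:R / (mval T V)%:R.
    rewrite -rTV; apply: le_trans hle; rewrite rT'.
    rewrite ler_pdivlMr ?ltr0n // mulrAC ler_pdivrMr ?ltr0n // -!natrM ler_nat.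
    by rewrite leq_mul2l m'le orbT.
  by move: h1; rewrite ler_pdivlMr ?ltr0n // mulrAC ler_pdivrMr ?ltr0n // -!natrM ler_nat.
rewrite mulnC.
apply: (leq_trans (leq_mul (leqnn #|Q|) (size_P_le T V))).
apply: leq_trans key _.
exact: leq_mul (card_T_le_P HS1) (leqnn _).
Qed.

Lemma set1_clique x : x \in Wset sz -> is_clique sz [set x].
Proof.
move=> xW; apply/and4P; split.
- by apply/set0Pn; exists x; rewrite inE.
- by rewrite sub1set.
- apply/forall_inP => y; rewrite inE => /eqP ->. apply/forall_inP => z; rewrite inE => /eqP ->; rewrite !eqxx. done.
- apply/forall_inP => y; rewrite inE => /eqP ->. apply/forall_inP => z; rewrite inE => /eqP ->; rewrite !eqxx. done.
Qed.

Lemma SBO_exists (E : {set subfile K}) : E \subset Wset sz -> E != set0 ->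
  exists P, SBO_out sz E P.
Proof.
move=> EW /set0Pn [x xE].
pose D := [set T : {set 'I_K} | (T \subset users E) && (T != set0)].
have D0 : D != set0.
  apply/set0Pn; exists [set x.1]; rewrite inE; apply/andP; split.
  - rewrite sub1set inE; apply/existsP; exists x.2; by rewrite -surjective_pairing.
  - by apply/set0Pn; exists x.1; rewrite inE.
have [T TD Hmax] := exists_argmax (fun T => Defs.ratio sz T (Vc E T)) D0.
move: TD; rewrite inE => /andP[TU T0].
exists (Rset T (Vc E T)), T, (Vc E T); split => //.
- exact: Vc_valid.
- move=> T' V' h1 h2 hv; rewrite (ratio_eq hv (@Vc_valid E T')).
  by apply: Hmax; rewrite inE h1 h2.
Qed.

Lemma SBO_props (E : {set subfile K}) P : E \subset Wset sz -> E != set0 -> SBO_out sz E P ->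
  [/\ is_clique sz P, P \subset E &
      forall S, is_clique sz S ->
        (clique_size sz P * #|S :&: E| <= #|P| * clique_size sz S)%N].
Proof.
move=> EW /set0Pn [x xE] [T [V [TU T0 HV Hmax ->]]].
have xW := subsetP EW x xE.
have [hpos _] := greedy_key EW HV Hmax (set1_clique xW).
have xI : [set x] :&: E != set0 by apply/set0Pn; exists x; rewrite !inE eqxx.
have [HS _ _] := ratio_pos_inv (hpos xI).
split.
- exact: Rset_clique EW HV T0 HS.
- exact: Rset_sub HV.
- by move=> S HS'; have [_ ->] := greedy_key EW HV Hmax HS'.
Qed.

Lemma run_cover (Ps : seq {set subfile K}) : forall E : {set subfile K}, E \subset Wset sz -> sacm_run sz E Ps ->
  [/\ forall P, P \in Ps -> is_clique sz P && (P \subset E),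
      forall x, x \in E -> has (fun P : {set subfile K} => x \in P) Ps & uniq Ps].
Proof.
elim: Ps => [|P Ps IH] E EW /=.
  by move=> ->; split => // x; rewrite inE.
move=> [E0 [HP Hrun]].
have [Pc PE _] := SBO_props EW E0 HP.
have EPW : E :\: P \subset Wset sz := subset_trans (subsetDl _ _) EW.
have [IH1 IH2 IH3] := IH _ EPW Hrun.
split.
- move=> Q; rewrite inE => /orP[/eqP ->|QPs]; first by rewrite Pc PE.
  case/andP: (IH1 Q QPs) => -> QE /=; exact: subset_trans QE (subsetDl _ _).
- move=> x xE; case xP: (x \in P). by apply/orP; left.
  apply/orP; right; apply: IH2; by rewrite inE xP xE.
- rewrite /= IH3 andbT; apply/negP => PPs.
  have /andP[_ PEP] := IH1 P PPs.
  have /set0Pn [y yP] : P != set0 by case/and4P: Pc.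
  by have := subsetP PEP y yP; rewrite inE yP.
Qed.

Lemma card_cover_le (P : {set subfile K}) (C : {set {set subfile K}}) :
  P \subset \bigcup_(S in C) S -> (#|P| <= \sum_(S in C) #|S :&: P|)%N.
Proof.
move=> sub.
apply: leq_trans (subset_leq_card (_ : P \subset \bigcup_(S in C) (S :&: P))) _.
  apply/subsetP => x xP; move/subsetP: sub => /(_ x xP) /bigcupP [S SC xS].
  by apply/bigcupP; exists S => //; rewrite inE xS xP.
apply: (big_ind2 (fun (X : {set subfile K}) (n : nat) => (#|X| <= n)%N)).
- by rewrite cards0.
- move=> X1 n1 X2 n2 h1 h2; rewrite cardsU.
  exact: leq_trans (leq_subr _ _) (leq_add h1 h2).
- by [].
Qed.

Lemma run_exists n : forall E : {set subfile K}, (#|E| <= n)%N -> E \subset Wset sz ->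
  exists Ps, sacm_run sz E Ps.
Proof.
elim: n => [|n IH] E cE EW.
  by exists [::]; apply/eqP; rewrite -cards_eq0 -leqn0.
have [->|E0] := eqVneq E set0; first by exists [::].
have [P HP] := SBO_exists EW E0.
have [Pc PE _] := SBO_props EW E0 HP.
have EPW : E :\: P \subset Wset sz := subset_trans (subsetDl _ _) EW.
have /set0Pn [y yP] : P != set0 by case/and4P: Pc.
have cEP : (#|E :\: P| <= n)%N.
  have := cardsID P E.
  have : (0 < #|E :&: P|)%N by rewrite card_gt0; apply/set0Pn; exists y; rewrite inE yP (subsetP PE).
  move: cE; lia.
have [Ps HPs] := IH _ cEP EPW.
by exists (P :: Ps).
Qed.

Section Pot.
Variable R : realType.

Lemma HnS n : Hn R n.+1 = Hn R n + (n.+1%:R)^-1.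
Proof. by rewrite /Hn big_ord_recr. Qed.

Lemma Hn_ge0 n : 0 <= Hn R n.
Proof. by apply: sumr_ge0 => i _; rewrite invr_ge0 ler0n. Qed.

Lemma Hn_mono m n : (m <= n)%N -> Hn R m <= Hn R n.
Proof.
elim: n => [|n IH]; first by rewrite leqn0 => /eqP ->.
rewrite leq_eqVlt => /orP[/eqP -> //|]; rewrite ltnS => /IH h.
rewrite HnS; apply: le_trans h _; rewrite lerDl invr_ge0 ler0n //.
Qed.

Lemma Hn_diff d a : (d <= a)%N -> d%:R / a%:R + Hn R (a - d) <= Hn R a.
Proof.
elim: d => [|d IH] le; first by rewrite mul0r add0r subn0.
have := IH (ltnW le).
set k := (a - d.+1)%N.
have ek : (a - d)%N = k.+1 by rewrite /k subnSK.
rewrite ek HnS.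
have ka : (k.+1 <= a)%N by rewrite -ek leq_subr.
have a0 : (0 < a)%N by apply: leq_trans ka.
have hinv : (a%:R : R)^-1 <= (k.+1%:R)^-1.
  by rewrite lef_pV2 ?posrE ?ltr0n // ler_nat.
have e : (d.+1%:R / a%:R : R) = d%:R / a%:R + a%:R^-1 by rewrite -natr1 mulrDl mul1r.
rewrite e; move: hinv; set u := (a%:R : R)^-1; set v := (k.+1%:R : R)^-1.
set w := d%:R / a%:R; set h1 := Hn R k; set h2 := Hn R a => hinv h.
lra.
Qed.

Definition Phi (C : {set {set subfile K}}) (E : {set subfile K}) : R :=
  \sum_(S in C) (clique_size sz S)%:R * Hn R #|S :&: E|.

Lemma Phi_ge0 C E : 0 <= Phi C E.
Proof. by apply: sumr_ge0 => S _; apply: mulr_ge0; [rewrite ler0n|apply: Hn_ge0]. Qed.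

Lemma step C (E P : {set subfile K}) : is_clique_cover sz C -> E \subset Wset sz ->
  P \subset E -> P != set0 ->
  (forall S, S \in C -> (clique_size sz P * #|S :&: E| <= #|P| * clique_size sz S)%N) ->
  (clique_size sz P)%:R + Phi C (E :\: P) <= Phi C E.
Proof.
move=> /andP[_ /eqP HU] EW PE P0 Hk.
set c := clique_size sz P; set n := #|P|.
have n0 : (0 < n)%N by rewrite card_gt0.
have per : forall S, S \in C ->
    (c%:R / n%:R) * #|S :&: P|%:R + (clique_size sz S)%:R * Hn R #|S :&: (E :\: P)|
    <= (clique_size sz S)%:R * Hn R #|S :&: E|.
  move=> S SC; set a := #|S :&: E|; set d := #|S :&: P|; set cS := clique_size sz S.
  have ed : #|S :&: (E :\: P)| = (a - d)%N.
    rewrite setIDA /a /d; have := cardsID P (S :&: E); rewrite -setIA (setIidPr PE) => <-.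
    by rewrite addKn.
  have dle : (d <= a)%N by apply: subset_leq_card; apply: setIS.
  have hH := Hn_diff dle.
  rewrite ed.
  have [a0|a0] := posnP a.
    by move: dle; rewrite a0 leqn0 => /eqP ->; rewrite mulr0 add0r.
  have hc : (c%:R / n%:R : R) <= cS%:R / a%:R.
    rewrite ler_pdivrMr ?ltr0n // mulrAC ler_pdivlMr ?ltr0n // -!natrM ler_nat.
    by rewrite [(cS * n)%N]mulnC; apply: Hk.
  have eq1 : (cS%:R / a%:R : R) * d%:R = cS%:R * (d%:R / a%:R).
    by rewrite -mulrA [_^-1 * _]mulrC.
  have d0 : (0 : R) <= d%:R by rewrite ler0n.
  have c0 : (0 : R) <= cS%:R by rewrite ler0n.
  move: hH hc eq1 d0 c0.
  set x := c%:R / n%:R; set y := cS%:R / a%:R; set h := d%:R / a%:R.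
  set D := (d%:R : R); set CS := (cS%:R : R); set H1 := Hn R (a - d); set H2 := Hn R a.
  move=> hH hc eq1 d0 c0; nra.
have := ler_sum (index_enum _) per; rewrite big_split /= -/(Phi C (E :\: P)) -/(Phi C E).
rewrite -mulr_sumr -natr_sum.
have hn : (n <= \sum_(S in C) #|S :&: P|)%N.
  by apply: card_cover_le; rewrite HU; exact: subset_trans PE EW.
have : (c%:R : R) <= c%:R / n%:R * (\sum_(S in C) #|S :&: P|)%:R.
  rewrite mulrAC ler_pdivlMr ?ltr0n // ler_wpM2l ?ler0n // ler_nat //.
move=> h1 h2; apply: le_trans h2; by rewrite lerD2r.
Qed.

Lemma run_cost C (Ps : seq {set subfile K}) : is_clique_cover sz C ->
  forall E : {set subfile K}, E \subset Wset sz -> sacm_run sz E Ps ->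
  ((\sum_(P <- Ps) clique_size sz P)%N%:R : R) <= Phi C E.
Proof.
move=> HC; elim: Ps => [|P Ps IH] E EW /=.
  by move=> _; rewrite big_nil; apply: Phi_ge0.
move=> [E0 [HP Hrun]].
have [Pc PE Hk] := SBO_props EW E0 HP.
have EPW : E :\: P \subset Wset sz := subset_trans (subsetDl _ _) EW.
have P0 : P != set0 by case/and4P: Pc.
rewrite big_cons natrD.
apply: le_trans (step HC EW PE P0 (fun S SC => Hk S _)); last first.
  by move/andP: HC => [/forall_inP HC _]; apply: HC.
by rewrite lerD2l; apply: IH.
Qed.

End Pot.

End Main.

Unset Implicit Arguments.
Set Strict Implicit.

Theorem theorem2 (R : realType) (K : nat) (sz : 'I_K -> {set 'I_K} -> nat) :
  (exists Ps, sacm_run sz (Wset sz) Ps) /\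
  forall Ps, sacm_run sz (Wset sz) Ps ->
    is_clique_cover sz (sacm_output Ps) /\
    forall C : {set {set subfile K}}, is_clique_cover sz C ->
      ((cover_cost sz (sacm_output Ps))%:R : R)
        <= (1 + ln (K%:R : R)) * (cover_cost sz C)%:R.
Proof.
split; first exact: (@run_exists K sz #|Wset sz| (Wset sz) (leqnn _) (subxx _)).
move=> Ps Hrun.
have [H1 H2 H3] := run_cover (subxx _) Hrun.
split.
  apply/andP; split.
    by apply/forall_inP => P; rewrite inE => PPs; case/andP: (H1 P PPs).
  apply/eqP/setP => x; apply/bigcupP/idP.
    by move=> [P PPs xP]; rewrite inE in PPs; case/andP: (H1 _ PPs) => _ /subsetP; apply.
  by move=> xW; have /hasP [P PPs xP] := H2 x xW; exists P; rewrite ?inE.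
move=> C HC.
have -> : cover_cost sz (sacm_output Ps) = (\sum_(P <- Ps) clique_size sz P)%N.
  by rewrite /cover_cost /sacm_output big_uniq //; apply: eq_bigl => P; rewrite inE.
apply: le_trans (run_cost R HC (subxx _) Hrun) _.
rewrite /Phi /cover_cost natr_sum mulr_sumr; apply: ler_sum => S SC.
rewrite [X in _ <= X]mulrC; apply: ler_wpM2l; first by rewrite ler0n.
have Sc : is_clique sz S by move/andP: HC => [/forall_inP HC' _]; apply: HC'.
apply: le_trans (Hn_le_ln R K).
apply: Hn_mono; apply: leq_trans (clique_card Sc).
exact: subset_leq_card (subsetIl _ _).
Qed.
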